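(* Let $\mathcal C$ be an $(n,k,r,t)$-SLRC and let $G$ be a minimal repair graph of $\mathcal C$ with source set $S(G)$. Then for every $E\subseteq[n]$ with $|E|\le t$, $$|\mathrm{Out}(E)|\ge|E\cap S(G)|.$$
   Context: For an $[n,k]$ linear code $\mathcal C$ over a finite field $\mathbb F$, a recovering set of $i\in[n]$ is a set $R\subseteq[n]\setminus\{i\}$ with nonzero $a_j\in\mathbb F$ such that $x_i=\sum_{j\in R}a_jx_j$ for all $x\in\mathcal C$; standing assumption: recovering sets have size $2\le|R|\le r<k$. $\mathcal C$ is an $(n,k,r,t)$-SLRC if every $E\subseteq[n]$ with $|E|\le t$ can be indexed $\{i_1,\dots,i_{|E|}\}$ so that each $i_\ell$ has a recovering set $R_\ell\subseteq([n]\setminus E)\cup\{i_1,\dots,i_{\ell-1}\}$. A repair graph of $\mathcal C$ is a directed acyclic graph on vertex set $[n]$ such that for every vertex $i$ with nonempty in-neighbourhood $\mathrm{In}(i)$, $\mathrm{In}(i)$ is a recovering set of $i$. A source is a vertex with no in-neighbours; $S(G)$ is the set of sources. A minimal repair graph is a repair graph whose number of sources is minimum among all repair graphs of $\mathcal C$. $\mathrm{Out}(v)$ is the set of out-neighbours of $v$, and for $E\subseteq[n]$, $\mathrm{Out}(E)=\bigcup_{v\in E}\mathrm{Out}(v)\setminus E$. *)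

(* Defs.v *)
From HB Require Import structures.
From mathcomp Require Import all_boot all_order all_algebra.
Set Implicit Arguments. Unset Strict Implicit. Unset Printing Implicit Defensive.
Import GRing.Theory.
Local Open Scope ring_scope.

(* A linear [n,k] code over a finite field F is a subspace C of F^n = 'rV[F]_n
   with \dim C = k.  Coordinates are indexed by 'I_n (i.e. [n] = {0,...,n-1}). *)

Definition recovering_set (F : fieldType) (n r : nat) (C : {vspace 'rV[F]_n})
    (i : 'I_n) (R : {set 'I_n}) : Prop :=
  [/\ i \notin R, (2 <= #|R|)%N, (#|R| <= r)%N &
   exists a : 'I_n -> F,
     (forall j, j \in R -> a j != 0) /\
     (forall x, x \in C -> x 0 i = \sum_(j in R) a j * x 0 j)].

Definition SLRC (F : fieldType) (n k r t : nat) (C : {vspace 'rV[F]_n}) : Prop :=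
  [/\ \dim C = k, (r < k)%N &
   forall E : {set 'I_n}, (#|E| <= t)%N ->
     exists s : seq 'I_n,
       [/\ uniq s, [set:: s] = E &
        forall (s1 s2 : seq 'I_n) (i : 'I_n), s = s1 ++ i :: s2 ->
          exists R : {set 'I_n},
            recovering_set r C i R /\ R \subset (~: E) :|: [set:: s1]]].

Definition In_nb (n : nat) (e : rel 'I_n) (i : 'I_n) : {set 'I_n} :=
  [set j | e j i].
Definition Out_nb (n : nat) (e : rel 'I_n) (v : 'I_n) : {set 'I_n} :=
  [set j | e v j].
Definition OutSet (n : nat) (e : rel 'I_n) (E : {set 'I_n}) : {set 'I_n} :=
  (\bigcup_(v in E) Out_nb e v) :\: E.
Definition sources (n : nat) (e : rel 'I_n) : {set 'I_n} :=
  [set i | In_nb e i == set0].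

(* acyclic: no directed cycle (including loops) *)
Definition dag_acyclic (n : nat) (e : rel 'I_n) : Prop :=
  forall u v, e u v -> ~~ connect e v u.

Definition repair_graph (F : fieldType) (n r : nat) (C : {vspace 'rV[F]_n})
    (e : rel 'I_n) : Prop :=
  dag_acyclic e /\
 forall i, In_nb e i != set0 -> recovering_set r C i (In_nb e i).

Definition minimal_repair_graph (F : fieldType) (n r : nat)
    (C : {vspace 'rV[F]_n}) (e : rel 'I_n) : Prop :=
  repair_graph r C e /\
  forall e' : rel 'I_n, repair_graph r C e' -> (#|sources e| <= #|sources e'|)%N.

(* Main.v *)
Require Import Defs.
From HB Require Import structures.
From mathcomp Require Import all_boot all_order all_algebra. From mathcomp Require Import zify.

Theorem lemma5 (F : finFieldType) (n k r t : nat) (C : {vspace 'rV[F]_n})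
    (e : rel 'I_n) :
  SLRC k r t C -> minimal_repair_graph r C e ->
  forall E : {set 'I_n}, (#|E| <= t)%N ->
    (#|E :&: sources e| <= #|OutSet e E|)%N.
Proof.
move=> [_ _ Hs] [[Hac Hrec] Hmin] E HE.
have [s [Us SE Hdec]] := Hs E HE.
have HsE : forall i, (i \in E) = (i \in s) by move=> i; rewrite -SE inE.
have : forall i : 'I_n, exists R : {set 'I_n}, i \in E ->
    recovering_set r C i R /\ R \subset (~: E) :|: [set:: take (index i s) s].
  move=> i; case: (boolP (i \in E)) => iE; last by exists set0.
  have is_ : i \in s by rewrite -HsE.
  have dec : s = take (index i s) s ++ i :: drop (index i s).+1 s.
    by rewrite -[X in _ ++ X :: _](nth_index i is_) -drop_nth ?index_mem // cat_take_drop.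
  have [R [HR1 HR2]] := Hdec _ _ _ dec.
  by exists R.
move=> /fin_all_exists [Rf HRf].
pose e' := fun u v : 'I_n => if v \in E then u \in Rf v
   else if v \in OutSet e E then false else e u v.
have Hout : forall u v, u \in E -> v \notin E -> e u v -> v \in OutSet e E.
  move=> u v uE vE euv; rewrite /OutSet inE vE /=.
  by apply/bigcupP; exists u => //; rewrite inE.
have RE : forall u v, v \in E -> u \in Rf v -> u \in E -> index u s < index v s.
  move=> u v vE uR uE; have [_ /subsetP sub] := HRf v vE.
  move: (sub u uR); rewrite !inE uE /= => ut.
  exact: index_ltn ut.
have step : forall x y z, e' x y ->
   ((y \in E -> z \in E /\ index y s <= index z s) /\
    (y \notin E -> z \notin E -> connect e y z)) ->
   ((x \in E -> z \in E /\ index x s <= index z s) /\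
    (x \notin E -> z \notin E -> connect e x z)).
  move=> x y z; rewrite /e'; case: (boolP (y \in E)) => yE.
    move=> xR [/(_ isT) [zE le] _]; split.
      by move=> xE; split=> //; apply: leq_trans (ltnW (RE _ _ yE xR xE)) le.
    by rewrite zE.
  case: (boolP (y \in OutSet e E)) => // yO exy [_ H2]; split.
    by move=> xE; rewrite (Hout _ _ xE yE exy) in yO.
  move=> xE zE; apply: (connect_trans (connect1 exy)); exact: H2.
have inv : forall x z, connect e' x z ->
   ((x \in E -> z \in E /\ index x s <= index z s) /\
    (x \notin E -> z \notin E -> connect e x z)).
  move=> x z /connectP [p]; elim: p x => [|y p IH] x /=.
    by move=> _ ->; split=> // _ _; exact: connect0.
  by move=> /andP [exy py] zl; apply: step exy (IH _ py zl).
have Hrg : repair_graph r C e'.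
  split.
    move=> u v; rewrite {1}/e'; case: (boolP (v \in E)) => vE.
      move=> uR; apply/negP => /inv [/(_ vE) [uE le] _].
      by have := RE _ _ vE uR uE; rewrite ltnNge le.
    case: (boolP (v \in OutSet e E)) => // vO euv.
    have uE : u \notin E by apply/negP => uE; rewrite (Hout _ _ uE vE euv) in vO.
    apply/negP => /inv [_ /(_ vE uE) cvu].
    by have := Hac _ _ euv; rewrite cvu.
  move=> i; case: (boolP (i \in E)) => iE.
    have -> : In_nb e' i = Rf i by apply/setP => j; rewrite inE /e' iE.
    by move=> _; case: (HRf i iE).
  case: (boolP (i \in OutSet e E)) => iO.
    have -> : In_nb e' i = set0 by apply/setP => j; rewrite !inE /e' (negbTE iE) iO.
    by rewrite eqxx.
  have -> : In_nb e' i = In_nb e i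
    by apply/setP => j; rewrite !inE /e' (negbTE iE) (negbTE iO).
  exact: Hrec.
have Hsub : sources e' \subset (sources e :\: E) :|: OutSet e E.
  apply/subsetP => i; rewrite [i \in sources e']inE => /eqP Hi.
  case: (boolP (i \in E)) => iE.
    have [[_ H2 _ _] _] := HRf i iE.
    have : Rf i = set0 by rewrite -Hi; apply/setP => j; rewrite inE /e' iE.
    by move=> R0; rewrite R0 cards0 in H2.
  case: (boolP (i \in OutSet e E)) => iO; first by rewrite in_setU iO orbT.
  rewrite in_setU (negbTE iO) orbF in_setD iE inE.
  apply/eqP; rewrite -Hi; apply/setP => j; rewrite !inE /e' (negbTE iE) (negbTE iO).
  by [].
have h0 := cardsID E (sources e).
have h1 := Hmin _ Hrg.
have h2 := subset_leq_card Hsub.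
have h3 : #|sources e :\: E :|: OutSet e E| <= #|sources e :\: E| + #|OutSet e E| := leq_card_setU (sources e :\: E) (OutSet e E).
rewrite setIC. lia.
Qed.
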